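(* For all $t>0$, the limit $$P'_{*,-}(t):=\lim_{s\uparrow t}\frac{P_*(t)-P_*(s)}{t-s}$$ exists and belongs to $[-\tau_{\max},-\tau_{\min}]$.
   Context: Setting: $Q=\mathbb{T}^2\setminus\bigcup_i\mathcal{O}_i$ is a Sinai billiard table (finitely many pairwise disjoint convex closed domains $\mathcal{O}_i$ in the two-torus with $C^3$ boundaries of strictly positive curvature) with finite horizon (no trajectory makes only tangential collisions). $T:M\to M$, $M=\partial Q\times[-\pi/2,\pi/2]$ (coordinates $(r,\varphi)$), is the billiard map, $\tau(x)$ the free flight time from $x$ to $T(x)$, $\tau_{\min}=\inf\tau>0$, $\tau_{\max}=\sup\tau<\infty$, $\Sigma_n\tau=\sum_{k=0}^{n-1}\tau\circ T^k$. $\mathcal{S}_0=\{\varphi=\pm\pi/2\}$ and for $n\ge1$, $\mathcal{S}_n=\bigcup_{i=-n}^{0}T^i\mathcal{S}_0$; $\mathcal{M}_0^n$ is the set of maximal connected components of $M\setminus\mathcal{S}_n$. For $t\ge0$, $Q_n(t)=\sum_{A\in\mathcal{M}_0^n}\sup_Ae^{-t\Sigma_n\tau}$ and $P_*(t)=\lim_{n\to\infty}\frac1n\log Q_n(t)$ (the limit exists and $t\mapsto P_*(t)$ is convex). *)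

(* Defs.v *)
From mathcomp Require Import all_boot all_order all_algebra.
From mathcomp Require Import all_classical all_reals all_analysis.
Import Order.TTheory GRing.Theory Num.Theory.
Import numFieldNormedType.Exports.
Local Open Scope classical_set_scope.
Local Open Scope ring_scope.

Section BilliardPressure.
Context {R : realType} {M : topologicalType}
  (T : M -> M) (tau : M -> R) (S0 : set M).

Definition birkhoff_tau (n : nat) (x : M) : R :=
  \sum_(k < n) tau (iter k T x).

(* S_n = ⋃_{i=-n}^{0} T^i S_0 = ⋃_{k=0}^{n} (T^k)^{-1} S_0 *)
Definition sing_set (n : nat) : set M :=
  [set x | exists k : nat, (k <= n)%N /\ S0 (iter k T x)].

Definition comps (n : nat) : set (set M) :=
  [set connected_component (~` sing_set n) x | x in ~` sing_set n].

Definition Qn (n : nat) (t : R) : R :=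
  \sum_(A \in comps n) sup [set expR (- (t * birkhoff_tau n x)) | x in A].

Definition pressure_seq (t : R) (n : nat) : R := ln (Qn n t) / n%:R.

Definition Pstar (t : R) : R := limn (pressure_seq t).

Definition tau_min : R := inf (range tau).
Definition tau_max : R := sup (range tau).

End BilliardPressure.

(* Main.v *)
Require Import Defs.
From mathcomp Require Import all_boot all_order all_algebra.
From mathcomp Require Import all_classical all_reals all_analysis.
From mathcomp Require Import ring lra.
Import Order.TTheory GRing.Theory Num.Theory.
Import numFieldNormedType.Exports.
Local Open Scope classical_set_scope.
Local Open Scope ring_scope.

Lemma expR_conv (R : realType) (l a b : R) : 0 <= l -> l <= 1 ->
  expR (l * a + (1 - l) * b) <= l * expR a + (1 - l) * expR b.
Proof.
move=> l0 l1.
have := @convex_expR R (Itv01 l0 l1) a b.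
by rewrite !convRE.
Qed.

Lemma ler_fsum (R : realType) (I : choiceType) (P : set I) (F G : I -> R) :
  finite_set P -> (forall i, P i -> F i <= G i) ->
  \sum_(i \in P) F i <= \sum_(i \in P) G i.
Proof.
move=> fP FG; rewrite !fsbig_finite// big_seq [leRHS]big_seq.
by apply: ler_sum => i; rewrite in_fset_set// inE => /FG.
Qed.

Lemma fsum_split (R : realType) (I : choiceType) (P : set I) (F G : I -> R) :
  finite_set P ->
  \sum_(i \in P) (F i + G i) = \sum_(i \in P) F i + \sum_(i \in P) G i.
Proof. by move=> fP; rewrite !fsbig_finite// big_split. Qed.

Section Abs.
Variables (R : realType) (M : Type) (g : M -> R) (C : set (set M)).
Hypothesis g0 : forall x, 0 <= g x.
Hypothesis fC : finite_set C.
Hypothesis neC : forall A, C A -> A !=set0.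
Hypothesis C0 : C !=set0.

Definition SA (A : set M) (t : R) := sup [set expR (- (t * g x)) | x in A].
Definition QQ (t : R) := \sum_(A \in C) SA A t.

Lemma SA_ub A t x : 0 <= t -> A x -> expR (- (t * g x)) <= SA A t.
Proof.
move=> t0 Ax; apply: ub_le_sup; last by exists x.
exists 1 => _ [y Ay <-]; rewrite expR_le1 oppr_le0 mulr_ge0//.
Qed.

Lemma SA_le A t c : A !=set0 -> (forall x, A x -> expR (- (t * g x)) <= c) ->
  SA A t <= c.
Proof.
move=> [x Ax] H; apply: ge_sup; first by exists (expR (- (t * g x))), x.
by move=> _ [y Ay <-]; apply: H.
Qed.

Lemma SA_gt0 A t : 0 <= t -> A !=set0 -> 0 < SA A t.
Proof. by move=> t0 [x Ax]; apply: (lt_le_trans (expR_gt0 (- (t * g x)))); exact: SA_ub. Qed.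

Lemma QQ_gt0 t : 0 <= t -> 0 < QQ t.
Proof.
move=> t0; case: C0 => A CA; rewrite /QQ (fsbigD1 A)//.
apply: ltr_pwDl; first by apply: SA_gt0 => //; apply: neC.
by apply: fsumr_ge0 => B [CB _]; apply: ltW; apply: SA_gt0 => //; apply: neC.
Qed.

Lemma QQ_up s t m : 0 <= s -> s <= t -> (forall x, m <= g x) ->
  QQ t <= expR (- ((t - s) * m)) * QQ s.
Proof.
move=> s0 st gm; rewrite /QQ mulr_fsumr; apply: ler_fsum => // A CA.
apply: SA_le; first exact: neC.
move=> x Ax.
have -> : - (t * g x) = - ((t - s) * g x) + - (s * g x) by ring.
rewrite expRD ler_pM ?expR_ge0 ?SA_ub ?(le_trans s0)//.
by rewrite ler_expR lerN2 ler_wpM2l// subr_ge0.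
Qed.

Lemma QQ_low s t Mx : 0 <= s -> s <= t -> (forall x, g x <= Mx) ->
  QQ s <= expR ((t - s) * Mx) * QQ t.
Proof.
move=> s0 st gM; rewrite /QQ mulr_fsumr; apply: ler_fsum => // A CA.
apply: SA_le; first exact: neC.
move=> x Ax.
have -> : - (s * g x) = ((t - s) * g x) + - (t * g x) by ring.
rewrite expRD ler_pM ?expR_ge0 ?SA_ub ?(le_trans s0)//.
by rewrite ler_expR ler_wpM2l// subr_ge0.
Qed.

Lemma QQ_conv l a b : 0 <= l -> l <= 1 -> 0 <= a -> 0 <= b ->
  QQ (l * a + (1 - l) * b) <= expR (l * ln (QQ a) + (1 - l) * ln (QQ b)).
Proof.
move=> l0 l1 a0 b0.
have s0 : 0 <= l * a + (1 - l) * b by rewrite addr_ge0 ?mulr_ge0 ?subr_ge0.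
set K := expR (l * ln (QQ a) + (1 - l) * ln (QQ b)).
have K0 : 0 < K by exact: expR_gt0.
have Qa := @QQ_gt0 a a0; have Qb := @QQ_gt0 b b0.
suff H : QQ (l * a + (1 - l) * b) / K <= l * (QQ a / QQ a) + (1 - l) * (QQ b / QQ b).
  move: H; rewrite !divff ?gt_eqF// !mulr1 ler_pdivrMr//.
  have -> : l + (1 - l) = 1 by ring.
  by rewrite mul1r.
rewrite /QQ mulr_fsuml !mulr_fsuml !mulr_fsumr -fsum_split//.
apply: ler_fsum => // A CA.
rewrite ler_pdivrMr//; apply: SA_le; first exact: neC.
move=> x Ax; rewrite -ler_pdivrMr//.
have E : expR (- ((l * a + (1 - l) * b) * g x)) / K =
  expR (l * (- (a * g x) - ln (QQ a)) + (1 - l) * (- (b * g x) - ln (QQ b))).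
  by rewrite /K -expRN -expRD; congr expR; ring.
rewrite E; apply: (le_trans (@expR_conv _ l _ _ l0 l1)).
rewrite !expRD !expRN !lnK ?posrE//.
rewrite -!expRN -/(QQ a) -/(QQ b).
rewrite lerD// ler_wpM2l ?subr_ge0// ler_wpM2r ?invr_ge0 ?(ltW Qa) ?(ltW Qb)//; exact: SA_ub.
Qed.

End Abs.

Lemma lim_le_aff (R : realType) (u v : R^nat) (c d : R) :
  cvgn u -> cvgn v -> (\forall n \near \oo, u n <= c * v n + d) ->
  limn u <= c * limn v + d.
Proof.
move=> hu hv H; apply: (ler_cvg_to hu _ H).
apply: cvgD; last exact: cvg_cst.
exact: cvgMl_tmp.
Qed.

Lemma lim_le_conv (R : realType) (u v w : R^nat) (l : R) :
  cvgn u -> cvgn v -> cvgn w -> (forall n, u n <= l * v n + (1 - l) * w n) ->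
  limn u <= l * limn v + (1 - l) * limn w.
Proof.
move=> hu hv hw H.
apply: (ler_cvg_to hu (g := fun n => l * v n + (1 - l) * w n)).
  by apply: cvgD; exact: cvgMl_tmp.
by apply: nearW.
Qed.

Section Main.
Variables (R : realType) (M : topologicalType)
  (T : M -> M) (tau : M -> R) (S0 : set M).
Hypothesis hfin : forall n : nat, finite_set (comps T S0 n).
Hypothesis hne : forall n : nat, ~` sing_set T S0 n !=set0.
Hypothesis htaumin : 0 < tau_min tau.
Hypothesis htaumax : has_ubound (range tau).
Hypothesis hlim : forall t : R, 0 <= t -> cvgn (pressure_seq T tau S0 t).

Lemma tau_ge x : tau_min tau <= tau x.
Proof.
have hl : has_lbound (range tau).
  apply: contrapT => nl; move: htaumin; rewrite /tau_min inf_out ?ltxx//.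
  by case.
exact: (ge_inf hl).
Qed.

Lemma tau_le x : tau x <= tau_max tau.
Proof. exact: (ub_le_sup htaumax). Qed.

Lemma birk_ge n x : n%:R * tau_min tau <= birkhoff_tau T tau n x.
Proof.
rewrite /birkhoff_tau mulr_natl.
have -> : tau_min tau *+ n = \sum_(k < n) tau_min tau by rewrite sumr_const card_ord.
by apply: ler_sum => k _; rewrite tau_ge.
Qed.

Lemma birk_le n x : birkhoff_tau T tau n x <= n%:R * tau_max tau.
Proof.
rewrite /birkhoff_tau mulr_natl.
have -> : tau_max tau *+ n = \sum_(k < n) tau_max tau by rewrite sumr_const card_ord.
by apply: ler_sum => k _; rewrite tau_le.
Qed.

Lemma birk_ge0 n x : 0 <= birkhoff_tau T tau n x.
Proof. by apply: le_trans (birk_ge n x); rewrite mulr_ge0// ltW. Qed.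

Lemma comps_ne n A : comps T S0 n A -> A !=set0.
Proof. by move=> [x nx <-]; exists x; exact: connected_component_refl. Qed.

Lemma comps0 n : comps T S0 n !=set0.
Proof. by case: (hne n) => x nx; exists (connected_component (~` sing_set T S0 n) x), x. Qed.

Lemma QnE n t : Qn T tau S0 n t = @QQ R M (birkhoff_tau T tau n) (comps T S0 n) t.
Proof. by []. Qed.


Lemma Q_gt0 n t : 0 <= t -> 0 < Qn T tau S0 n t.
Proof.
move=> t0; rewrite QnE.
exact: (@QQ_gt0 _ _ _ _ (@birk_ge0 n) (hfin n) (@comps_ne n) (comps0 n) t t0).
Qed.

Lemma ps_up s t n : 0 <= s -> s <= t -> (0 < n)%N ->
  pressure_seq T tau S0 t n <= 1 * pressure_seq T tau S0 s n + - ((t - s) * tau_min tau).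
Proof.
move=> s0 st n0.
have H := @QQ_up _ _ _ _ (@birk_ge0 n) (hfin n) (@comps_ne n) _ _ _ s0 st (@birk_ge n).
rewrite -!QnE in H.
have Qt := Q_gt0 n t (le_trans s0 st); have Qs := Q_gt0 n _ s0.
rewrite -ler_ln ?posrE ?mulr_gt0 ?expR_gt0// lnM ?posrE ?expR_gt0// expRK in H.
rewrite /pressure_seq.
have n0' : 0 < n%:R :> R by rewrite ltr0n.
have -> : 1 * (ln (Qn T tau S0 n s) / n%:R) + - ((t - s) * tau_min tau) =
  (- ((t - s) * (n%:R * tau_min tau)) + ln (Qn T tau S0 n s)) / n%:R.
  by field; rewrite gt_eqF.
by rewrite ler_pM2r ?invr_gt0.
Qed.

Lemma ps_low s t n : 0 <= s -> s <= t -> (0 < n)%N ->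
  pressure_seq T tau S0 s n <= 1 * pressure_seq T tau S0 t n + (t - s) * tau_max tau.
Proof.
move=> s0 st n0.
have H := @QQ_low _ _ _ _ (@birk_ge0 n) (hfin n) (@comps_ne n) _ _ _ s0 st (@birk_le n).
rewrite -!QnE in H.
have Qt := Q_gt0 n t (le_trans s0 st); have Qs := Q_gt0 n _ s0.
rewrite -ler_ln ?posrE ?mulr_gt0 ?expR_gt0// lnM ?posrE ?expR_gt0// expRK in H.
rewrite /pressure_seq.
have n0' : 0 < n%:R :> R by rewrite ltr0n.
have -> : 1 * (ln (Qn T tau S0 n t) / n%:R) + (t - s) * tau_max tau =
  ((t - s) * (n%:R * tau_max tau) + ln (Qn T tau S0 n t)) / n%:R.
  by field; rewrite gt_eqF.
by rewrite ler_pM2r ?invr_gt0.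
Qed.

Lemma ps_conv l a b n : 0 <= l -> l <= 1 -> 0 <= a -> 0 <= b ->
  pressure_seq T tau S0 (l * a + (1 - l) * b) n <=
  l * pressure_seq T tau S0 a n + (1 - l) * pressure_seq T tau S0 b n.
Proof.
move=> l0 l1 a0 b0.
have H := @QQ_conv _ _ _ _ (@birk_ge0 n) (hfin n) (@comps_ne n) (comps0 n) _ _ _ l0 l1 a0 b0.
rewrite -!QnE in H.
have s0 : 0 <= l * a + (1 - l) * b by rewrite addr_ge0 ?mulr_ge0 ?subr_ge0.
have Qs := Q_gt0 n _ s0.
rewrite -ler_ln ?posrE ?expR_gt0// expRK in H.
rewrite /pressure_seq.
have -> : l * (ln (Qn T tau S0 n a) / n%:R) + (1 - l) * (ln (Qn T tau S0 n b) / n%:R) =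
  (l * ln (Qn T tau S0 n a) + (1 - l) * ln (Qn T tau S0 n b)) / n%:R.
  by rewrite [RHS]mulrDl !mulrA.
by rewrite ler_wpM2r ?invr_ge0.
Qed.

Let P := Pstar T tau S0.

Lemma P_up s t : 0 <= s -> s <= t -> P t <= 1 * P s + - ((t - s) * tau_min tau).
Proof.
move=> s0 st; apply: lim_le_aff; [exact: hlim (le_trans s0 st)|exact: hlim|].
by exists 1%N => // n /= n1; exact: ps_up.
Qed.

Lemma P_low s t : 0 <= s -> s <= t -> P s <= 1 * P t + (t - s) * tau_max tau.
Proof.
move=> s0 st; apply: lim_le_aff; [exact: hlim|exact: hlim (le_trans s0 st)|].
by exists 1%N => // n /= n1; exact: ps_low.
Qed.

Lemma P_conv l a b : 0 <= l -> l <= 1 -> 0 <= a -> 0 <= b ->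
  P (l * a + (1 - l) * b) <= l * P a + (1 - l) * P b.
Proof.
move=> l0 l1 a0 b0.
have s0 : 0 <= l * a + (1 - l) * b by rewrite addr_ge0 ?mulr_ge0 ?subr_ge0.
apply: lim_le_conv; [exact: hlim|exact: hlim|exact: hlim|].
by move=> n; exact: ps_conv.
Qed.


Lemma final t : 0 < t -> exists L : R,
  ((fun s : R => (P t - P s) / (t - s)) @ at_left t --> L)
  /\ - tau_max tau <= L <= - tau_min tau.
Proof.
move=> t0.
set D := fun s : R => (P t - P s) / (t - s).
have Dub s : 0 <= s -> s < t -> D s <= - tau_min tau.
  move=> s0 st; have := @P_up s t s0 (ltW st).
  rewrite /D ler_pdivrMr ?subr_gt0// mul1r => H.
  have -> : - tau_min tau * (t - s) = - ((t - s) * tau_min tau) by ring.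
  by rewrite lerBlDr addrC.
have Dlb s : 0 <= s -> s < t -> - tau_max tau <= D s.
  move=> s0 st; have := @P_low s t s0 (ltW st).
  rewrite /D ler_pdivlMr ?subr_gt0// mul1r => H.
  have -> : - tau_max tau * (t - s) = - ((t - s) * tau_max tau) by ring.
  by rewrite lerNl opprB lerBlDl.
have Dmono s1 s2 : 0 <= s1 -> s1 <= s2 -> s2 < t -> D s1 <= D s2.
  move=> s10 s12 s2t.
  have d1 : 0 < t - s1 by rewrite subr_gt0 (le_lt_trans s12).
  have d2 : 0 < t - s2 by rewrite subr_gt0.
  set l := (t - s2) / (t - s1).
  have l0 : 0 <= l by rewrite divr_ge0// ltW.
  have l1 : l <= 1 by rewrite ler_pdivrMr// mul1r lerD2l lerN2.
  have H := @P_conv l s1 t l0 l1 s10 (ltW t0).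
  have E : l * s1 + (1 - l) * t = s2 by rewrite /l; field; rewrite gt_eqF.
  rewrite E in H.
  have El : l * (t - s1) = t - s2 by rewrite /l; field; rewrite gt_eqF.
  rewrite /D ler_pdivrMr// mulrAC ler_pdivlMr// -[t - s2]El [X in X <= _]mulrA (ler_pM2r d1).
  move: H; generalize (P t) (P s1) (P s2) => a b c H.
  have -> : (a - b) * l = a - (l * b + (1 - l) * a) by ring.
  by rewrite lerD2l lerN2.
have cv : cvg (D @ t^'-).
  apply: nondecreasing_at_left_is_cvgr.
  - near=> x => y z; rewrite !in_itv /= => /andP[xy yt] /andP[xz zt] yz.
    apply: Dmono => //; apply: ltW; apply: lt_trans xy.
    by near: x; exact: nbhs_left_gt.
  - near=> x; exists (- tau_min tau) => _ [y /= yi <-].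
    move: yi; rewrite in_itv /= => /andP[xy yt]; apply: Dub => //.
    apply: ltW; apply: lt_trans xy.
    by near: x; exact: nbhs_left_gt.
exists (lim (D @ t^'-)); split; first exact: cv.
apply/andP; split.
- apply: limr_ge => //; near=> s; apply: Dlb.
  + by near: s; exact: nbhs_left_ge.
  + by near: s; exact: nbhs_left_lt.
- apply: limr_le => //; near=> s; apply: Dub.
  + by near: s; exact: nbhs_left_ge.
  + by near: s; exact: nbhs_left_lt.
Unshelve. all: by end_near.
Qed.

End Main.

Theorem lemma3p4 (R : realType) (M : topologicalType)
  (T : M -> M) (tau : M -> R) (S0 : set M)
  (hfin : forall n : nat, finite_set (comps T S0 n))
  (hne : forall n : nat, ~` sing_set T S0 n !=set0)
  (htaumin : 0 < tau_min tau)
  (htaumax : has_ubound (range tau))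
  (hlim : forall t : R, 0 <= t -> cvgn (pressure_seq T tau S0 t)) :
  forall t : R, 0 < t ->
    exists L : R,
      ((fun s : R => (Pstar T tau S0 t - Pstar T tau S0 s) / (t - s))
         @ at_left t --> L)
      /\ - tau_max tau <= L <= - tau_min tau.
Proof.
move=> t t0.
exact: (@final R M T tau S0 hfin hne htaumin htaumax hlim t t0).
Qed.
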